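(* $\gamma^{L-LD}(\mathcal{S})=\frac15$ and $\gamma^{L-LD}(\mathcal{H})=\frac14$; that is, every local locating-dominating code in the square grid has density at least $1/5$ and some such code has density exactly $1/5$, and every local locating-dominating code in the hexagonal grid has density at least $1/4$ and some such code has density exactly $1/4$.
   Context: The square grid $\mathcal{S}$ has vertex set $\mathbb{Z}^2$, with $\mathbf{u},\mathbf{v}$ adjacent iff $\mathbf{u}-\mathbf{v}\in\{(\pm1,0),(0,\pm1)\}$. The hexagonal grid $\mathcal{H}$ has vertex set $\mathbb{Z}^2$, with $\mathbf{u}=(i,j)$ and $\mathbf{v}$ adjacent iff $\mathbf{u}-\mathbf{v}\in\{(\pm1,0),(0,(-1)^{i+j+1})\}$. For a nonempty $C\subseteq\mathbb{Z}^2$ and vertex $\mathbf{u}$, $I(\mathbf{u})=N[\mathbf{u}]\cap C$ where $N[\mathbf{u}]$ is the closed neighbourhood. $C$ is a covering code if $I(\mathbf{u})\ne\emptyset$ for all $\mathbf{u}$; a local locating-dominating code if it is covering and $I(\mathbf{u})\ne I(\mathbf{v})$ for all adjacent $\mathbf{u},\mathbf{v}\notin C$. The density of $C$ is $D(C)=\limsup_{n\to\infty}|C\cap Q_n|/|Q_n|$ with $Q_n=\{(i,j)\in\mathbb{Z}^2:|i|\le n,|j|\le n\}$. $\gamma^{L-LD}(G)$ denotes the smallest density of a local locating-dominating code in $G$. *)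

(* Defs.v *)
From Stdlib Require Import ZArith Reals List.
From Coquelicot Require Import Coquelicot.
Import ListNotations.

Definition vertex := (Z * Z)%type.

Definition graph := vertex -> vertex -> Prop.

Definition square_grid : graph := fun u v =>
  let d := ((fst u - fst v)%Z, (snd u - snd v)%Z) in
  d = (1%Z, 0%Z) \/ d = ((-1)%Z, 0%Z) \/ d = (0%Z, 1%Z) \/ d = (0%Z, (-1)%Z).

Definition sign_pow (k : Z) : Z := if Z.even k then 1%Z else (-1)%Z.

Definition hex_grid : graph := fun u v =>
  let d := ((fst u - fst v)%Z, (snd u - snd v)%Z) in
  d = (1%Z, 0%Z) \/ d = ((-1)%Z, 0%Z) \/
  d = (0%Z, sign_pow (fst u + snd u + 1)%Z).

Definition code := vertex -> bool.

Definition closed_nbhd (G : graph) (u w : vertex) : Prop := w = u \/ G u w.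

Definition I_set (G : graph) (C : code) (u : vertex) : vertex -> Prop :=
  fun w => closed_nbhd G u w /\ C w = true.

Definition nonempty_code (C : code) : Prop := exists w, C w = true.

Definition covering_code (G : graph) (C : code) : Prop :=
  nonempty_code C /\ forall u, exists w, I_set G C u w.

Definition I_differ (G : graph) (C : code) (u v : vertex) : Prop :=
  ~ (forall w, I_set G C u w <-> I_set G C v w).

Definition local_LD_code (G : graph) (C : code) : Prop :=
  covering_code G C /\
  forall u v, G u v -> C u = false -> C v = false -> I_differ G C u v.

Definition Zrange (n : nat) : list Z :=
  map (fun k => (Z.of_nat k - Z.of_nat n)%Z) (seq 0 (2 * n + 1)).

Definition Q (n : nat) : list vertex := list_prod (Zrange n) (Zrange n).

Definition density_ratio (C : code) (n : nat) : R :=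
  INR (length (filter C (Q n))) / INR (length (Q n)).

Definition density (C : code) : Rbar := LimSup_seq (density_ratio C).

(* Main.v *)
Require Import Defs.
From Stdlib Require Import ZArith Reals List Lia Lra.
From Coquelicot Require Import Coquelicot.
Import ListNotations.

Lemma nodup_map_inj {A B} (f : A -> B) (l : list A) :
  (forall x y, f x = f y -> x = y) -> NoDup l -> NoDup (map f l).
Proof.
  intros Hf H; induction H; simpl; constructor; auto.
  intros Hin; apply in_map_iff in Hin as [y [Hy Hy']].
  apply Hf in Hy; subst; contradiction.
Qed.

Lemma nodup_prod {A B} (l : list A) (l' : list B) :
  NoDup l -> NoDup l' -> NoDup (list_prod l l').
Proof.
  intros H H'; induction H; simpl; [constructor|].
  apply NoDup_app; auto.
  - apply nodup_map_inj; auto. intros y z E; inversion E; auto.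
  - intros [a b] Ha Hb. apply in_map_iff in Ha as [y [Hy _]].
    inversion Hy; subst. apply in_prod_iff in Hb as [Hb _]. contradiction.
Qed.

Lemma in_Zrange n z : In z (Zrange n) <-> (- Z.of_nat n <= z <= Z.of_nat n)%Z.
Proof.
  unfold Zrange; rewrite in_map_iff; split.
  - intros [k [Hk Hin]]. apply in_seq in Hin. lia.
  - intros H. exists (Z.to_nat (z + Z.of_nat n)). split.
    + rewrite Z2Nat.id; lia.
    + apply in_seq. lia.
Qed.

Lemma nodup_Zrange n : NoDup (Zrange n).
Proof.
  apply nodup_map_inj. intros x y E; lia. apply seq_NoDup.
Qed.

Lemma nodup_Q n : NoDup (Q n).
Proof. apply nodup_prod; apply nodup_Zrange. Qed.

Lemma in_Q n a b : In (a, b) (Q n) <->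
  ((- Z.of_nat n <= a <= Z.of_nat n) /\ (- Z.of_nat n <= b <= Z.of_nat n))%Z.
Proof. unfold Q. rewrite in_prod_iff, !in_Zrange. tauto. Qed.

Lemma length_Q n : length (Q n) = ((2 * n + 1) * (2 * n + 1))%nat.
Proof. unfold Q, Zrange. rewrite (length_prod (A:=Z) (B:=Z)), length_map, length_seq. reflexivity. Qed.

Lemma filter_len_split {A} (f : A -> bool) l :
  length l = (length (filter f l) + length (filter (fun x => negb (f x)) l))%nat.
Proof. symmetry; apply filter_length. Qed.

Lemma filter_filter_le {A} (f g : A -> bool) l :
  (length (filter f (filter g l)) <= length (filter f l))%nat.
Proof.
  induction l; simpl; auto. destruct (g a); simpl; destruct (f a); simpl; lia.
Qed.

Lemma cover_count {A B} (P : B -> A -> bool) k (L : list B) : forall l : list A,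
  (forall x, In x l -> exists c, In c L /\ P c x = true) ->
  (forall c, (length (filter (P c) l) <= k)%nat) ->
  (length l <= k * length L)%nat.
Proof.
  induction L as [|c0 L IH]; intros l Hc Hk.
  - destruct l as [|x l]; [simpl; lia|].
    destruct (Hc x (or_introl eq_refl)) as [c [[] _]].
  - rewrite (filter_len_split (P c0) l). simpl.
    specialize (IH (filter (fun x => negb (P c0 x)) l)).
    assert (length (filter (fun x => negb (P c0 x)) l) <= k * length L)%nat.
    { apply IH.
      - intros x Hx. apply filter_In in Hx as [Hx Hn].
        destruct (Hc x Hx) as [c [[E|Hin] Hp]].
        + subst. rewrite Hp in Hn. discriminate.
        + eauto.
      - intros c. eapply Nat.le_trans; [apply filter_filter_le|]. apply Hk. }
    specialize (Hk c0). lia.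
Qed.

Lemma filter_disj_eq {A} (f g : A -> bool) l :
  (forall x, In x l -> f x = true -> g x = false) ->
  filter f (filter (fun x => negb (g x)) l) = filter f l.
Proof.
  induction l as [|a l IH]; intros H; simpl; auto.
  destruct (f a) eqn:Ef.
  - rewrite (H a (or_introl eq_refl) Ef). simpl. rewrite Ef, IH; auto.
    intros; apply H; simpl; auto.
  - destruct (g a); simpl; try rewrite Ef; apply IH; intros; apply H; simpl; auto.
Qed.

Lemma pack_count {A B} (P : B -> A -> bool) k (L : list B) : NoDup L -> forall l : list A,
  (forall c, In c L -> (k <= length (filter (P c) l))%nat) ->
  (forall c c' x, In c L -> In c' L -> P c x = true -> P c' x = true -> c = c') ->
  (k * length L <= length l)%nat.
Proof.
  induction 1 as [|c0 L Hn Hnd IH]; intros l Hk Hd; simpl; [lia|].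
  rewrite (filter_len_split (P c0) l).
  assert (k * length L <= length (filter (fun x => negb (P c0 x)) l))%nat.
  { apply IH.
    - intros c Hc. rewrite filter_disj_eq. apply Hk; simpl; auto.
      intros x _ Hx. destruct (P c0 x) eqn:E; auto.
      assert (c = c0) by (apply (Hd c c0 x); simpl; auto). subst; contradiction.
    - intros c c' x ? ?; apply Hd; simpl; auto. }
  specialize (Hk c0 (or_introl eq_refl)). lia.
Qed.

Definition veq_dec : forall x y : vertex, {x = y} + {x <> y}.
Proof. decide equality; apply Z.eq_dec. Defined.

Definition inb (x : vertex) (l : list vertex) : bool :=
  if in_dec veq_dec x l then true else false.

Lemma inb_true x l : inb x l = true <-> In x l.
Proof. unfold inb; destruct (in_dec veq_dec x l); split; auto; discriminate. Qed.

Definition box1 (u w : vertex) : Prop :=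
  (fst u - 1 <= fst w <= fst u + 1 /\ snd u - 1 <= snd w <= snd u + 1)%Z.

Lemma box_Q n u w : In u (Q n) -> box1 u w -> In w (Q (S n)).
Proof.
  destruct u as [a b], w as [c d]; unfold box1; cbn [fst snd].
  rewrite !in_Q. lia.
Qed.

Lemma count_lb (nbrs : vertex -> list vertex) k (C : code) :
  (forall u, length (nbrs u) = k) -> (forall u, NoDup (nbrs u)) ->
  (forall u w, In w (nbrs u) -> In u (nbrs w)) ->
  (forall u w, In w (nbrs u) -> box1 u w) ->
  (forall u, exists w, In w (nbrs u) /\ C w = true) ->
  forall n, ((2 * n + 1) * (2 * n + 1) <= k * length (filter C (Q (S n))))%nat.
Proof.
  intros Hl Hnd Hs Hb Hc n. rewrite <- length_Q.
  apply (cover_count (fun c x => inb x (nbrs c))).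
  - intros x Hx. destruct (Hc x) as [w [Hw Cw]]. exists w. split.
    + apply filter_In; split; auto. eapply box_Q; eauto.
    + apply inb_true; auto.
  - intros c. rewrite <- (Hl c). apply NoDup_incl_length.
    + apply NoDup_filter, nodup_Q.
    + intros x Hx. apply filter_In in Hx as [_ Hx]. apply inb_true; auto.
Qed.

Lemma count_ub (nbrs : vertex -> list vertex) k (C : code) :
  (forall u, length (nbrs u) = k) -> (forall u, NoDup (nbrs u)) ->
  (forall u w, In w (nbrs u) -> box1 u w) ->
  (forall c c' x, C c = true -> C c' = true -> In x (nbrs c) -> In x (nbrs c') -> c = c') ->
  forall n, (k * length (filter C (Q n)) <= (2 * S n + 1) * (2 * S n + 1))%nat.
Proof.
  intros Hl Hnd Hb Hd n. rewrite <- length_Q.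
  apply (pack_count (fun c x => inb x (nbrs c))).
  - apply NoDup_filter, nodup_Q.
  - intros c Hc. apply filter_In in Hc as [Hc _]. rewrite <- (Hl c).
    apply NoDup_incl_length; auto.
    intros x Hx. apply filter_In; split.
    + eapply box_Q; eauto.
    + apply inb_true; auto.
  - intros c c' x Hc Hc' Hx Hx'. apply filter_In in Hc as [_ Hc], Hc' as [_ Hc'].
    apply inb_true in Hx, Hx'. eauto.
Qed.

Lemma bip_LLD (G : graph) (C : code) :
  (forall u v, G u v -> Z.even (fst u + snd u) = negb (Z.even (fst v + snd v))) ->
  covering_code G C -> local_LD_code G C.
Proof.
  intros Hb Hc. split; auto. intros u v Guv Cu Cv Heq.
  destruct Hc as [_ Hc]. destruct (Hc u) as [w Hw].
  pose proof Hw as Hw'. apply Heq in Hw'.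
  destruct Hw as [[E|Guw] Cw]; [subst; congruence|].
  destruct Hw' as [[E|Gvw] _]; [subst; congruence|].
  apply Hb in Guv, Guw, Gvw.
  destruct (Z.even (fst u + snd u)), (Z.even (fst v + snd v)), (Z.even (fst w + snd w));
    simpl in *; congruence.
Qed.

Lemma LimSup_ge (u : nat -> R) l :
  (forall eps, 0 < eps -> eventually (fun n => l - eps <= u n)) ->
  Rbar_le l (LimSup_seq u).
Proof.
  intros H.
  assert (H' : forall eps, 0 < eps -> Rbar_le (l - eps) (LimSup_seq u)).
  { intros eps He. rewrite <- (LimSup_seq_const (l - eps)). apply LimSup_le, H, He. }
  destruct (LimSup_seq u) as [x| |] eqn:E; simpl in *; auto.
  - destruct (Rle_lt_dec l x) as [h|h]; auto.
    specialize (H' ((l - x) / 2)). simpl in H'. lra.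
  - specialize (H' 1). simpl in H'. apply H'; lra.
Qed.

Lemma LimSup_le' (u : nat -> R) l :
  (forall eps, 0 < eps -> eventually (fun n => u n <= l + eps)) ->
  Rbar_le (LimSup_seq u) l.
Proof.
  intros H.
  assert (H' : forall eps, 0 < eps -> Rbar_le (LimSup_seq u) (l + eps)).
  { intros eps He. rewrite <- (LimSup_seq_const (l + eps)). apply LimSup_le, H, He. }
  destruct (LimSup_seq u) as [x| |] eqn:E; simpl in *; auto.
  - destruct (Rle_lt_dec x l) as [h|h]; auto.
    specialize (H' ((x - l) / 2)). simpl in H'. lra.
  - specialize (H' 1). simpl in H'. apply H'; lra.
Qed.

Lemma le_div_r a b q : 0 < q -> a * q <= b -> a <= b / q.
Proof.
  intros Hq H. unfold Rdiv. replace a with ((a * q) * / q) by (field; lra).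
  apply Rmult_le_compat_r; auto. left; apply Rinv_0_lt_compat; auto.
Qed.

Lemma le_div_l a b q : 0 < q -> b <= a * q -> b / q <= a.
Proof.
  intros Hq H. unfold Rdiv. replace a with ((a * q) * / q) by (field; lra).
  apply Rmult_le_compat_r; auto. left; apply Rinv_0_lt_compat; auto.
Qed.

Lemma le_Kmul K P : 1 <= K -> 0 <= P -> P <= K * P.
Proof. intros; nra. Qed.

Lemma core_lb K Cr x eps : 1 <= K -> 0 <= x -> 2 < eps * (x + 1) ->
  (2 * x + 1) * (2 * x + 1) <= K * Cr ->
  1 / K - eps <= Cr / ((2 * (x + 1) + 1) * (2 * (x + 1) + 1)).
Proof.
  intros HK Hx He HC. apply le_div_r. nra.
  apply (Rmult_le_reg_l K). lra.
  replace (K * ((1 / K - eps) * ((2 * (x + 1) + 1) * (2 * (x + 1) + 1))))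
    with ((2 * (x + 1) + 1) * (2 * (x + 1) + 1) - K * (eps * (2 * (x + 1) + 1) * (2 * (x + 1) + 1)))
    by (field; lra).
  assert (0 < eps) by nra.
  assert (eps * (2 * (x + 1) + 1) * (2 * (x + 1) + 1) <= K * (eps * (2 * (x + 1) + 1) * (2 * (x + 1) + 1))) by (apply le_Kmul; auto; apply Rmult_le_pos; [apply Rmult_le_pos|]; lra).
  assert (eps * (4 * (x + 1) * (x + 1)) <= eps * ((2 * (x + 1) + 1) * (2 * (x + 1) + 1))) by (apply Rmult_le_compat_l; nra).
  assert (8 * (x + 1) <= 4 * (x + 1) * (eps * (x + 1))) by nra.
  nra.
Qed.

Lemma core_ub K Cr x eps : 1 <= K -> 1 <= x -> 8 < eps * x ->
  K * Cr <= (2 * (x + 1) + 1) * (2 * (x + 1) + 1) ->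
  Cr / ((2 * x + 1) * (2 * x + 1)) <= 1 / K + eps.
Proof.
  intros HK Hx He HC. apply le_div_l. nra.
  apply (Rmult_le_reg_l K). lra.
  replace (K * ((1 / K + eps) * ((2 * x + 1) * (2 * x + 1))))
    with ((2 * x + 1) * (2 * x + 1) + K * (eps * (2 * x + 1) * (2 * x + 1)))
    by (field; lra).
  assert (0 < eps) by nra.
  assert (eps * (2 * x + 1) * (2 * x + 1) <= K * (eps * (2 * x + 1) * (2 * x + 1))) by (apply le_Kmul; auto; apply Rmult_le_pos; [apply Rmult_le_pos|]; lra).
  assert (eps * (4 * x * (x + 1)) <= eps * ((2 * x + 1) * (2 * x + 1))) by (apply Rmult_le_compat_l; nra).
  assert (8 * (x + 1) <= 4 * (x + 1) * (eps * x)) by nra.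
  nra.
Qed.

Lemma INR_sq n : INR ((2 * n + 1) * (2 * n + 1)) = (2 * INR n + 1) * (2 * INR n + 1).
Proof. rewrite mult_INR, plus_INR, mult_INR. simpl. ring. Qed.

Lemma dens_lb (C : code) k : (0 < k)%nat ->
  (forall n, ((2 * n + 1) * (2 * n + 1) <= k * length (filter C (Q (S n))))%nat) ->
  Rbar_le (1 / INR k) (density C).
Proof.
  intros Hk H. unfold density. apply LimSup_ge. intros eps He.
  destruct (archimed_cor1 (eps / 2)) as [N [HN HN0]]; [lra|].
  exists N. intros m Hm. destruct m as [|m]; [lia|].
  unfold density_ratio. rewrite length_Q, INR_sq, S_INR.
  apply core_lb.
  - apply (le_INR 1). lia.
  - apply pos_INR.
  - assert (/ INR (S m) <= / INR N).
    { apply Rinv_le_contravar. apply (lt_INR 0); lia. apply le_INR; lia. }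
    rewrite S_INR in H0. pose proof (pos_INR m).
    assert (0 < / (INR m + 1)) by (apply Rinv_0_lt_compat; lra).
    assert (/ (INR m + 1) * (INR m + 1) = 1) by (field; lra).
    nra.
  - specialize (H m). apply le_INR in H. rewrite INR_sq, mult_INR in H. exact H.
Qed.

Lemma dens_ub (C : code) k : (0 < k)%nat ->
  (forall n, (k * length (filter C (Q n)) <= (2 * S n + 1) * (2 * S n + 1))%nat) ->
  Rbar_le (density C) (1 / INR k).
Proof.
  intros Hk H. unfold density. apply LimSup_le'. intros eps He.
  destruct (archimed_cor1 (eps / 8)) as [N [HN HN0]]; [lra|].
  exists N. intros m Hm.
  unfold density_ratio. rewrite length_Q, INR_sq.
  assert (HNm : INR N <= INR m) by (apply le_INR; lia).
  assert (H1 : 1 <= INR N) by (apply (le_INR 1); lia).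
  apply core_ub.
  - apply (le_INR 1). lia.
  - lra.
  - assert (/ INR m <= / INR N) by (apply Rinv_le_contravar; lra).
    assert (/ INR m * INR m = 1) by (field; lra).
    assert (0 < / INR m) by (apply Rinv_0_lt_compat; lra).
    nra.
  - specialize (H m). apply le_INR in H. rewrite mult_INR, INR_sq, S_INR in H. exact H.
Qed.

Ltac inv_pairs := repeat match goal with
  | H : (_, _) = (_, _) |- _ => apply pair_equal_spec in H; destruct H end.

Ltac solve_in := simpl; repeat first [left; apply pair_equal_spec; split; lia | right].

Ltac in_cases H := simpl in H; repeat destruct H as [H|H]; try contradiction; inv_pairs.

Definition nbrsS (u : vertex) : list vertex :=
  let (a, b) := u in [(a, b); (a + 1, b)%Z; (a - 1, b)%Z; (a, b + 1)%Z; (a, b - 1)%Z].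

Lemma nbrsS_len u : length (nbrsS u) = 5%nat.
Proof. destruct u; reflexivity. Qed.

Ltac nodup_tac := repeat constructor; simpl; intros H; repeat destruct H as [H|H];
  try contradiction; inv_pairs; lia.

Lemma nbrsS_nodup u : NoDup (nbrsS u).
Proof. destruct u as [a b]; simpl. nodup_tac. Qed.

Lemma nbrsS_sym u w : In w (nbrsS u) -> In u (nbrsS w).
Proof. destruct u as [a b], w as [c d]; intros H; in_cases H; subst; solve_in. Qed.

Lemma nbrsS_box u w : In w (nbrsS u) -> box1 u w.
Proof. destruct u as [a b], w as [c d]; intros H; in_cases H; subst; unfold box1; simpl; lia. Qed.

Lemma nbrsS_nbhd u w : closed_nbhd square_grid u w <-> In w (nbrsS u).
Proof.
  destruct u as [a b], w as [c d]; unfold closed_nbhd, square_grid; simpl; split.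
  - intros [H|H]; [inv_pairs; solve_in|]. repeat destruct H as [H|H]; inv_pairs; solve_in.
  - intros H; in_cases H; subst; [left; f_equal; lia|right..];
      repeat first [left; apply pair_equal_spec; split; lia | right]; apply pair_equal_spec; split; lia.
Qed.

Lemma par_flip x y : (x - y = 1 \/ x - y = -1)%Z -> Z.even x = negb (Z.even y).
Proof.
  intros [H|H]; [replace x with (y + 1)%Z by lia; rewrite Z.even_add
                |replace x with (y - 1)%Z by lia; rewrite Z.even_sub];
  change (Z.even 1) with false; destruct (Z.even y); reflexivity.
Qed.

Lemma sq_bip u v : square_grid u v -> Z.even (fst u + snd u) = negb (Z.even (fst v + snd v)).
Proof.
  destruct u as [a b], v as [c d]; unfold square_grid; simpl.
  intros H; apply par_flip; repeat destruct H as [H|H]; inv_pairs; lia.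
Qed.

Ltac gen_mod := repeat match goal with
  | H : context [(?t mod ?m)%Z] |- _ =>
      let r := fresh "r" in let q := fresh "q" in
      pose proof (Z.mod_pos_bound t m ltac:(lia)); pose proof (Z.div_mod t m ltac:(lia));
      set (r := (t mod m)%Z) in *; set (q := (t / m)%Z) in *; clearbody r q
  | |- context [(?t mod ?m)%Z] =>
      let r := fresh "r" in let q := fresh "q" in
      pose proof (Z.mod_pos_bound t m ltac:(lia)); pose proof (Z.div_mod t m ltac:(lia));
      set (r := (t mod m)%Z) in *; set (q := (t / m)%Z) in *; clearbody r q
  end.

Definition C5 (u : vertex) : bool := Z.eqb ((fst u + 2 * snd u) mod 5) 0.

Lemma C5_cover u : exists w, In w (nbrsS u) /\ C5 w = true.
Proof.
  destruct u as [a b]. unfold C5.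
  assert (H : ((a + 2 * b) mod 5 = 0 \/ (a + 2 * b) mod 5 = 1 \/ (a + 2 * b) mod 5 = 2 \/
    (a + 2 * b) mod 5 = 3 \/ (a + 2 * b) mod 5 = 4)%Z) by (gen_mod; lia).
  repeat destruct H as [H|H].
  - exists (a, b); split; [solve_in|cbn [fst snd]; apply Z.eqb_eq; gen_mod; lia].
  - exists (a - 1, b)%Z; split; [solve_in|cbn [fst snd]; apply Z.eqb_eq; gen_mod; lia].
  - exists (a, b - 1)%Z; split; [solve_in|cbn [fst snd]; apply Z.eqb_eq; gen_mod; lia].
  - exists (a, b + 1)%Z; split; [solve_in|cbn [fst snd]; apply Z.eqb_eq; gen_mod; lia].
  - exists (a + 1, b)%Z; split; [solve_in|cbn [fst snd]; apply Z.eqb_eq; gen_mod; lia].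
Qed.

Lemma C5_disj c c' x : C5 c = true -> C5 c' = true -> In x (nbrsS c) -> In x (nbrsS c') -> c = c'.
Proof.
  intros Hc Hc' Hx Hx'. apply nbrsS_sym in Hx, Hx'.
  destruct x as [a b], c as [c1 c2], c' as [d1 d2]. unfold C5 in *; cbn [fst snd] in *; simpl in Hx, Hx'.
  apply Z.eqb_eq in Hc, Hc'.
  repeat destruct Hx as [Hx|Hx]; try contradiction; repeat destruct Hx' as [Hx'|Hx']; try contradiction;
  inv_pairs; apply pair_equal_spec; gen_mod; lia.
Qed.

Lemma square_part :
  (forall C : code, local_LD_code square_grid C ->
      Rbar_le (Finite (1/5)) (density C)) /\
   (exists C : code, local_LD_code square_grid C /\ density C = Finite (1/5)).
Proof.
  assert (E : 1 / 5 = 1 / INR 5) by (simpl; lra).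
  assert (LB : forall C : code, covering_code square_grid C -> Rbar_le (Finite (1/5)) (density C)).
  { intros C [_ Hc]. rewrite E. apply dens_lb; [lia|].
    apply (count_lb nbrsS); [exact nbrsS_len|exact nbrsS_nodup|exact nbrsS_sym|exact nbrsS_box|].
    intros u. destruct (Hc u) as [w [Hw Cw]]. exists w; split; auto. apply nbrsS_nbhd; auto. }
  assert (Cov : covering_code square_grid C5).
  { split. exists (0, 0)%Z; reflexivity.
    intros u. destruct (C5_cover u) as [w [Hw Cw]]. exists w. split; auto. apply nbrsS_nbhd; auto. }
  split.
  - intros C [Hc _]. apply LB; auto.
  - exists C5. split. apply bip_LLD; auto. exact sq_bip.
    apply Rbar_le_antisym; [|apply LB; auto].
    rewrite E. apply dens_ub; [lia|].
    apply (count_ub nbrsS); [exact nbrsS_len|exact nbrsS_nodup|exact nbrsS_box|exact C5_disj].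
Qed.

Lemma sign_spec k : (sign_pow k = 1 /\ exists q, k = 2 * q)%Z \/ (sign_pow k = -1 /\ exists q, k = 2 * q + 1)%Z.
Proof.
  unfold sign_pow. destruct (Z.even k) eqn:E; [left|right]; split; auto.
  - apply Z.even_spec in E. exact E.
  - assert (Z.odd k = true) by (rewrite <- Z.negb_even, E; reflexivity).
    apply Z.odd_spec in H. exact H.
Qed.

Ltac sgn := repeat match goal with
  | |- context [sign_pow ?t] =>
      let E := fresh "E" in let q := fresh "q" in let Hq := fresh "Hq" in
      destruct (sign_spec t) as [[E [q Hq]]|[E [q Hq]]]; rewrite E in *; clear E
  | H : context [sign_pow ?t] |- _ =>
      let E := fresh "E" in let q := fresh "q" in let Hq := fresh "Hq" in
      destruct (sign_spec t) as [[E [q Hq]]|[E [q Hq]]]; rewrite E in *; clear E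
  end.

Definition nbrsH (u : vertex) : list vertex :=
  let (a, b) := u in [(a, b); (a + 1, b)%Z; (a - 1, b)%Z; (a, b - sign_pow (a + b + 1))%Z].

Lemma nbrsH_len u : length (nbrsH u) = 4%nat.
Proof. destruct u; reflexivity. Qed.

Lemma nbrsH_nodup u : NoDup (nbrsH u).
Proof. destruct u as [a b]; simpl. sgn; nodup_tac. Qed.

Lemma nbrsH_sym u w : In w (nbrsH u) -> In u (nbrsH w).
Proof. destruct u as [a b], w as [c d]; intros H; in_cases H; subst; simpl; sgn; solve_in; lia. Qed.

Lemma nbrsH_box u w : In w (nbrsH u) -> box1 u w.
Proof. destruct u as [a b], w as [c d]; intros H; in_cases H; subst; unfold box1; simpl; sgn; lia. Qed.

Lemma nbrsH_nbhd u w : closed_nbhd hex_grid u w <-> In w (nbrsH u).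
Proof.
  destruct u as [a b], w as [c d]; unfold closed_nbhd, hex_grid; simpl; split.
  - intros [H|H]; [inv_pairs; solve_in|]. repeat destruct H as [H|H]; inv_pairs; sgn; solve_in; lia.
  - intros H; in_cases H; subst; [left; f_equal; lia|right..]; sgn;
      repeat first [left; apply pair_equal_spec; split; lia | right]; apply pair_equal_spec; split; lia.
Qed.

Lemma hex_bip u v : hex_grid u v -> Z.even (fst u + snd u) = negb (Z.even (fst v + snd v)).
Proof.
  destruct u as [a b], v as [c d]; unfold hex_grid; simpl.
  intros H; apply par_flip; repeat destruct H as [H|H]; inv_pairs; sgn; lia.
Qed.

Definition C4 (u : vertex) : bool := Z.eqb ((fst u + 2 * snd u) mod 4) 0.

Lemma C4_cover u : exists w, In w (nbrsH u) /\ C4 w = true.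
Proof.
  destruct u as [a b]. unfold C4.
  assert (H : ((a + 2 * b) mod 4 = 0 \/ (a + 2 * b) mod 4 = 1 \/ (a + 2 * b) mod 4 = 2 \/
    (a + 2 * b) mod 4 = 3)%Z) by (gen_mod; lia).
  repeat destruct H as [H|H].
  - exists (a, b); split; [solve_in|cbn [fst snd]; apply Z.eqb_eq; gen_mod; lia].
  - exists (a - 1, b)%Z; split; [solve_in|cbn [fst snd]; apply Z.eqb_eq; gen_mod; lia].
  - exists (a, b - sign_pow (a + b + 1))%Z; split; [solve_in|cbn [fst snd]; apply Z.eqb_eq; sgn; gen_mod; lia].
  - exists (a + 1, b)%Z; split; [solve_in|cbn [fst snd]; apply Z.eqb_eq; gen_mod; lia].
Qed.

Lemma C4_disj c c' x : C4 c = true -> C4 c' = true -> In x (nbrsH c) -> In x (nbrsH c') -> c = c'.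
Proof.
  intros Hc Hc' Hx Hx'. apply nbrsH_sym in Hx, Hx'.
  destruct x as [a b], c as [c1 c2], c' as [d1 d2]. unfold C4 in *; cbn [fst snd] in *; simpl in Hx, Hx'.
  apply Z.eqb_eq in Hc, Hc'.
  repeat destruct Hx as [Hx|Hx]; try contradiction; repeat destruct Hx' as [Hx'|Hx']; try contradiction;
  inv_pairs; apply pair_equal_spec; sgn; gen_mod; lia.
Qed.

Lemma hex_part :
  (forall C : code, local_LD_code hex_grid C ->
      Rbar_le (Finite (1/4)) (density C)) /\
   (exists C : code, local_LD_code hex_grid C /\ density C = Finite (1/4)).
Proof.
  assert (E : 1 / 4 = 1 / INR 4) by (simpl; lra).
  assert (LB : forall C : code, covering_code hex_grid C -> Rbar_le (Finite (1/4)) (density C)).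
  { intros C [_ Hc]. rewrite E. apply dens_lb; [lia|].
    apply (count_lb nbrsH); [exact nbrsH_len|exact nbrsH_nodup|exact nbrsH_sym|exact nbrsH_box|].
    intros u. destruct (Hc u) as [w [Hw Cw]]. exists w; split; auto. apply nbrsH_nbhd; auto. }
  assert (Cov : covering_code hex_grid C4).
  { split. exists (0, 0)%Z; reflexivity.
    intros u. destruct (C4_cover u) as [w [Hw Cw]]. exists w. split; auto. apply nbrsH_nbhd; auto. }
  split.
  - intros C [Hc _]. apply LB; auto.
  - exists C4. split. apply bip_LLD; auto. exact hex_bip.
    apply Rbar_le_antisym; [|apply LB; auto].
    rewrite E. apply dens_ub; [lia|].
    apply (count_ub nbrsH); [exact nbrsH_len|exact nbrsH_nodup|exact nbrsH_box|exact C4_disj].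
Qed.

Theorem mainTheorem12 :
  ((forall C : code, local_LD_code square_grid C ->
      Rbar_le (Finite (1/5)) (density C)) /\
   (exists C : code, local_LD_code square_grid C /\ density C = Finite (1/5)))
  /\
  ((forall C : code, local_LD_code hex_grid C ->
      Rbar_le (Finite (1/4)) (density C)) /\
   (exists C : code, local_LD_code hex_grid C /\ density C = Finite (1/4))).
Proof. split; [exact square_part | exact hex_part]. Qed.
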